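(* Let $T$ be a real random variable with characteristic function $\Phi(\omega)=\mathbb E[e^{i\omega T}]$. Then for all real $\omega\neq 0$, $$\mathrm{cost}(T)=\langle|T|\rangle\ \ge\ \frac{1-|\Phi(\omega)|}{|\omega|}.$$
   Context: $\langle|T|\rangle=\mathbb E|T|$ denotes the expected absolute value of $T$ (possibly infinite). *)

(* Defs.v *)
From HB Require Import structures.
From mathcomp Require Import all_boot all_order all_algebra.
From mathcomp Require Import all_classical all_reals all_analysis.
From mathcomp Require Import complex.
Set Implicit Arguments. Unset Strict Implicit. Unset Printing Implicit Defensive.
Import Order.TTheory GRing.Theory Num.Theory.
Local Open Scope ring_scope.

(* Both expectations are finite (bounded integrands
   on a probability space), so [fine] just extracts the real value. *)
Definition charfun {d} {Omega : measurableType d} {R : realType}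
  (P : probability Omega R) (X : Omega -> R) (w : R) : R[i] :=
  Complex (fine ('E_P[fun x => cos (w * X x)])%E)
          (fine ('E_P[fun x => sin (w * X x)])%E).

(* Main.v *)
Require Import Defs.
From HB Require Import structures.
From mathcomp Require Import all_boot all_order all_algebra.
From mathcomp Require Import all_classical all_reals all_analysis.
From mathcomp Require Import complex.
From mathcomp Require Import measurable_realfun.
Import Order.TTheory GRing.Theory Num.Theory.
Import numFieldNormedType.Exports.
Local Open Scope classical_set_scope.
Local Open Scope ring_scope.

Lemma one_sub_cos_le (R : realType) (x : R) : 1 - cos x <= `|x|.
Proof.
rewrite -cos_norm.
have x0 : 0 <= `|x| by [].
have hd : forall y, y \in `]0, `|x|[ -> is_derive y 1 (@cos R) (- sin y).
  by move=> y _; exact: is_derive_cos.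
have [|c _ E] := @MVT_segment R cos (fun y => - sin y) 0 `|x| x0 hd.
  exact/continuous_subspaceT/continuous_cos.
have : cos `|x| = 1 - sin c * `|x|.
  by move: E; rewrite cos0 subr0 => /eqP; rewrite subr_eq => /eqP ->; rewrite mulNr addrC.
move=> ->; rewrite opprB addrC subrK.
by rewrite ler_piMl // sin_le1.
Qed.

Lemma le_normc (R : rcfType) (a b : R) : a <= ComplexField.Normc.normc (Complex a b).
Proof.
rewrite /=. apply: (le_trans (ler_norm a)).
rewrite -sqrtr_sqr. rewrite ler_sqrt ?lerDl ?sqr_ge0 //.
by rewrite addr_ge0 ?sqr_ge0.
Qed.

Theorem theorem2 (d : measure_display) (Omega : measurableType d) (R : realType)
  (P : probability Omega R) (T : {RV P >-> R}) (w : R) :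
  w != 0 ->
  (((1 - ComplexField.Normc.normc (charfun P T w)) / `|w|)%:E <= 'E_P[(fun x => `|T x|)%R])%E.
Proof.
move=> w0.
have w0' : 0 < `|w| by rewrite normr_gt0.
set f := fun x => cos (w * T x).
have mT : measurable_fun setT T by exact: measurable_funPT.
have mf : measurable_fun setT f.
  apply: measurableT_comp; first by apply: measurable_realfun.continuous_measurable_fun => x; exact: continuous_cos.
  by apply: measurable_realfun.measurable_funM => //; exact: measurable_cst.
have intf : P.-integrable setT (EFin \o f).
  apply/integrableP; split; first exact/measurable_EFinP.
  apply: (@le_lt_trans _ _ (\int[P]_(x in setT) (cst 1%:E x))%E).
    apply: ge0_le_integral => //.
    - apply/measurable_EFinP; exact: measurableT_comp.
    - by move=> x _; rewrite /= lee_fin /f cos_max.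
  by rewrite integral_cst //= probability_setT mule1 ltry.
have int1 : P.-integrable setT (EFin \o cst (1:R)).
  exact: finite_measure_integrable_cst.
have finf : ('E_P[f] \is a fin_num)%E.
  by rewrite unlock integrable_fin_num.
set c := fine ('E_P[f])%E.
have Ec : ('E_P[f] = c%:E)%E by rewrite fineK.
have key : ((1 - c)%:E <= `|w|%:E * 'E_P[(fun x => `|T x|)%R])%E.
  have -> : (1 - c)%:E = (\int[P]_(x in setT) ((cst (1:R) x)%:E - (f x)%:E))%E.
    have E1 := expectation_cst P (1:R); rewrite unlock in E1.
    rewrite integralB_EFin // E1.
    have Ec' : (\int[P]_x (f x)%:E)%E = c%:E by rewrite -Ec unlock.
    by rewrite Ec' EFinB.
  have mA : measurable_fun setT (fun x => (`|T x|)%:E).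
    apply/measurable_EFinP; exact: measurableT_comp.
  rewrite unlock -(ge0_integralZl _ _ mA) //.
  apply: ge0_le_integral => //.
  - by move=> x _; rewrite /= lee_fin subr_ge0 /f cos_le1.
  - apply/measurable_EFinP; exact: measurable_realfun.measurable_funB.
  - by apply: emeasurable_funM => //.
  - move=> x _; rewrite /= -EFinM lee_fin -normrM; exact: one_sub_cos_le.
apply: (@le_trans _ _ ((1 - c) / `|w|)%:E).
  rewrite lee_fin ler_wpM2r ?invr_ge0 // lerB //.
  exact: le_normc.
have ge0 : (0 <= 'E_P[(fun x => `|T x|)%R])%E by apply: expectation_ge0.
move: ge0 key; case: ('E_P[_])%E => [t||] //=.
- by move=> _; rewrite -EFinM !lee_fin ler_pdivrMr // mulrC.
- by move=> _ _; exact: leey.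
Qed.
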